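(* Under the standing assumptions below, let $\{\rho_k\}$, $\{\epsilon_k\}$ be positive sequences with $\rho_k\to\infty$ and $\epsilon_k\to0$, and for each $k$ let $(x^k,y^k,\lambda^k,z^k)\in\mathcal X\times\mathcal Y\times\Lambda\times\mathcal Y$ be an $\epsilon_k$-optimal solution of $\min_{x\in\mathcal X}\max_{y\in\mathcal Y,\lambda\in\Lambda}\min_{z\in\mathcal Y}P_{\rho_k}(x,y,\lambda,z)$. Then every accumulation point $(x_\infty,y_\infty,\lambda_\infty)$ of $\{(x^k,y^k,\lambda^k)\}$ is a global minimax point of the minimax bilevel problem, i.e. $(y_\infty,\lambda_\infty)\in\mathcal F_{\rm low}$, $x_\infty\in\arg\min_{x\in\mathcal X}\Phi(x)$, and $(y_\infty,\lambda_\infty)\in\arg\max_{(y,\lambda)\in\mathcal F_{\rm low}}f(x_\infty,y,\lambda)$.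
   Context: Standing setting. $\mathcal X\subset\mathbb R^{d_x}$, $\mathcal Y\subset\mathbb R^{d_y}$, $\Lambda\subset\mathbb R^{d_\lambda}$ are nonempty convex compact sets. $\bar f:\mathbb R^{d_x}\times\mathbb R^{d_y}\to\mathbb R$ is continuously differentiable with $\nabla\bar f$ Lipschitz on $\mathcal X\times\mathcal Y$; $A\in\mathbb R^{d_\lambda\times d_x}$, $B\in\mathbb R^{d_\lambda\times d_y}$, $c\in\mathbb R^{d_\lambda}$, and $f(x,y,\lambda):=\bar f(x,y)+\lambda^T(Ax+By-c)$. $g:\mathbb R^{d_y}\times\mathbb R^{d_\lambda}\to\mathbb R$ is continuously differentiable with $\nabla g$ Lipschitz on $\mathcal Y\times\Lambda$, and $g(\cdot,\lambda)$ is convex for each $\lambda\in\Lambda$. Definitions: $\mathcal F_{\rm low}:=\{(y,\lambda)\in\mathcal Y\times\Lambda:\ g(y,\lambda)=\min_{z\in\mathcal Y}g(z,\lambda)\}$; $P_\rho(x,y,\lambda,z):=f(x,y,\lambda)-\rho(g(y,\lambda)-g(z,\lambda))$; $F_\rho(x):=\max_{y\in\mathcal Y,\lambda\in\Lambda}\min_{z\in\mathcal Y}P_\rho(x,y,\lambda,z)$; $\Phi_\rho^*:=\min_{x\in\mathcal X}F_\rho(x)$; $\Phi(x):=\max_{(y,\lambda)\in\mathcal F_{\rm low}}f(x,y,\lambda)$. A point $(x_\epsilon,y_\epsilon,\lambda_\epsilon,z_\epsilon)\in\mathcal X\times\mathcal Y\times\Lambda\times\mathcal Y$ is an $\epsilon$-optimal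 solution of $\min_{x}\max_{y,\lambda}\min_{z}P_\rho$ if (i) $P_\rho(x_\epsilon,y_\epsilon,\lambda_\epsilon,z_\epsilon)-\min_{z\in\mathcal Y}P_\rho(x_\epsilon,y_\epsilon,\lambda_\epsilon,z)\le\epsilon$, (ii) $F_\rho(x_\epsilon)-P_\rho(x_\epsilon,y_\epsilon,\lambda_\epsilon,z_\epsilon)\le\epsilon$, and (iii) $P_\rho(x_\epsilon,y_\epsilon,\lambda_\epsilon,z_\epsilon)-\Phi_\rho^*\le\epsilon$. *)

(* Defs.v *)
From HB Require Import structures.
From mathcomp Require Import all_boot all_order all_algebra.
From mathcomp Require Import all_classical all_reals all_analysis.
Set Implicit Arguments. Unset Strict Implicit. Unset Printing Implicit Defensive.
Import Order.TTheory GRing.Theory Num.Theory.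
Import numFieldNormedType.Exports.
Local Open Scope classical_set_scope.
Local Open Scope ring_scope.

Section Defs.
Variable R : realType.


(* h is continuously differentiable on R^n (differentiable everywhere, with
   derivative continuous: each directional derivative p |-> 'd h p v is
   continuous; equivalent in finite dimension) and its gradient is Lipschitz
   on S (in operator norm). *)
Definition C1_LipGrad_on n (h : 'cV[R]_n -> R) (S : set 'cV[R]_n) : Prop :=
  (forall p, differentiable h p) /\
  (forall v, continuous (fun p => 'd h p v)) /\
  exists L : R, forall p q, S p -> S q -> forall v,
      `|'d h p v - 'd h q v| <= L * `|p - q| * `|v|.

Variables (dx dy dl : nat).
(* fbar is a function of (x,y), encoded on the concatenation col_mx x y;
   similarly g is a function of (y,lambda) encoded on col_mx y lambda. *)
Variables (fbar : 'cV[R]_(dx + dy) -> R) (A : 'M[R]_(dl, dx)) (B : 'M[R]_(dl, dy))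
  (c : 'cV[R]_dl) (g : 'cV[R]_(dy + dl) -> R)
  (X : set 'cV[R]_dx) (Y : set 'cV[R]_dy) (Lam : set 'cV[R]_dl).

Definition gv (y : 'cV[R]_dy) (l : 'cV[R]_dl) : R := g (col_mx y l).

Definition fv (x : 'cV[R]_dx) (y : 'cV[R]_dy) (l : 'cV[R]_dl) : R :=
  fbar (col_mx x y) + (l^T *m (A *m x + B *m y - c)) 0 0.

Definition Flow : set ('cV[R]_dy * 'cV[R]_dl) :=
  [set p | Y p.1 /\ Lam p.2 /\ gv p.1 p.2 = inf [set gv z p.2 | z in Y]].

Definition Pr (rho : R) x y l z : R := fv x y l - rho * (gv y l - gv z l).

Definition minz (rho : R) x y l : R := inf [set Pr rho x y l z | z in Y].

Definition Frho (rho : R) (x : 'cV[R]_dx) : R :=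
  sup [set minz rho x p.1 p.2 | p in Y `*` Lam].

Definition Phistar (rho : R) : R := inf [set Frho rho x | x in X].

Definition Phi (x : 'cV[R]_dx) : R := sup [set fv x p.1 p.2 | p in Flow].

Definition eps_optimal (rho eps : R) x y l z : Prop :=
  [/\ X x, Y y, Lam l & Y z] /\
  [/\ Pr rho x y l z - minz rho x y l <= eps,
       Frho rho x - Pr rho x y l z <= eps &
       Pr rho x y l z - Phistar rho <= eps].

End Defs.

(* Main.v *)
Require Import Defs.
From HB Require Import structures.
From mathcomp Require Import all_boot all_order all_algebra.
From mathcomp Require Import all_classical all_reals all_analysis.
From mathcomp Require Import lra.
Import Order.TTheory GRing.Theory Num.Theory.
Import numFieldNormedType.Exports.
Local Open Scope classical_set_scope.
Local Open Scope ring_scope.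
Section S.
Variable R : realType.

Lemma mx_cont {S : topologicalType} m n (f : S -> 'M[R]_(m,n)) :
  (forall i j, continuous (fun s => f s i j)) -> continuous f.
Proof.
move=> H s A [P Pn sPA].
rewrite /= nbhs_filterE.
apply: (filterS (fun x Hx => sPA (f x) Hx)).
apply: filter_forall => i; apply: filter_forall => j.
exact: (H i j s (P i j) (Pn i j)).
Qed.

Lemma cont_sum {S : topologicalType} n (f : 'I_n -> S -> R) :
  (forall i, continuous (f i)) -> continuous (fun s => \sum_(i < n) f i s).
Proof.
elim: n f => [|n IH] f H.
  under eq_fun do rewrite big_ord0; exact: cst_continuous.
under eq_fun do rewrite big_ord_recr /=.
move=> s; apply: continuousD; last exact: H.
exact: (IH (fun i => f (widen_ord (leqnSn n) i))).
Qed.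

Lemma ent_cont {S : topologicalType} m n (P : S -> 'M[R]_(m,n)) i j :
  continuous P -> continuous (fun s => P s i j).
Proof. by move=> cP s; exact: (continuous_comp (cP s) (@coord_continuous R m n i j (P s))). Qed.

Lemma mulmx_cont {S : topologicalType} m n p (P : S -> 'M[R]_(m,n)) (Q : S -> 'M[R]_(n,p)) :
  continuous P -> continuous Q -> continuous (fun s => P s *m Q s).
Proof.
move=> cP cQ; apply: mx_cont => i j.
under eq_fun do rewrite mxE.
apply: cont_sum => k s; apply: continuousM; exact: ent_cont.
Qed.

Lemma col_cont {S : topologicalType} m1 m2 n (P : S -> 'M[R]_(m1,n)) (Q : S -> 'M[R]_(m2,n)) :
  continuous P -> continuous Q -> continuous (fun s => col_mx (P s) (Q s)).
Proof.
move=> cP cQ; apply: mx_cont => i j.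
under eq_fun do rewrite mxE.
by case: (fintype.split i) => k; exact: ent_cont.
Qed.

Lemma addmx_cont {S : topologicalType} m n (P Q : S -> 'M[R]_(m,n)) :
  continuous P -> continuous Q -> continuous (fun s => P s + Q s).
Proof.
move=> cP cQ; apply: mx_cont => i j.
under eq_fun do rewrite mxE.
by move=> s; apply: continuousD; exact: ent_cont.
Qed.

Lemma submx_cont {S : topologicalType} m n (P Q : S -> 'M[R]_(m,n)) :
  continuous P -> continuous Q -> continuous (fun s => P s - Q s).
Proof.
move=> cP cQ; apply: mx_cont => i j.
under eq_fun do rewrite !mxE.
by move=> s; apply: continuousB; exact: ent_cont.
Qed.

Lemma tr_cont {S : topologicalType} m n (P : S -> 'M[R]_(m,n)) :
  continuous P -> continuous (fun s => (P s)^T).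
Proof.
move=> cP; apply: mx_cont => i j.
under eq_fun do rewrite mxE.
exact: ent_cont.
Qed.

Lemma fst_cont {T U : topologicalType} : continuous (@fst T U).
Proof. by move=> [a b]; exact: cvg_fst. Qed.
Lemma snd_cont {T U : topologicalType} : continuous (@snd T U).
Proof. by move=> [a b]; exact: cvg_snd. Qed.

Lemma phi_ge (phi : nat -> nat) : {homo phi : m n / (m < n)%N >-> (m < n)%N} ->
  forall n, (n <= phi n)%N.
Proof.
move=> Hp; elim=> [|n IH] //.
by apply: leq_ltn_trans IH _; apply: Hp.
Qed.

Lemma phi_cvg (phi : nat -> nat) : {homo phi : m n / (m < n)%N >-> (m < n)%N} ->
  phi @ \oo --> \oo.
Proof.
move=> Hp P [N _ HN]; exists N => // n /= Hn; apply: HN.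
change (N <= phi n)%N; exact: (leq_trans Hn (@phi_ge phi Hp n)).
Qed.

Lemma seq_cluster (T : topologicalType) (K : set T) (u : nat -> T) :
  compact K -> (\forall n \near \oo, K (u n)) ->
  exists p, K p /\ forall S, closed S -> (\forall n \near \oo, S (u n)) -> S p.
Proof.
move=> cK Ku.
have [p [Kp cp]] := cK (u @ \oo) _ Ku.
exists p; split => // S cS HS.
rewrite clusterE in cp.
have := cp S HS; by rewrite -(closure_id S).1.
Qed.

Lemma cont_bnd {T : topologicalType} (K : set T) (h : T -> R) :
  compact K -> continuous h -> exists M, forall t, K t -> `|h t| <= M.
Proof.
move=> cK ch.
have := compact_bounded (continuous_compact (continuous_subspaceT ch) cK).
move=> [M [_ HM]]; exists (M + 1) => t Kt.
by apply: (HM (M + 1) _ (h t)); [rewrite ltrDl | exists t].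
Qed.

Lemma bnd_lo (x M : R) : `|x| <= M -> - M <= x.
Proof. by rewrite ler_norml => /andP[]. Qed.
Lemma bnd_hi (x M : R) : `|x| <= M -> x <= M.
Proof. by rewrite ler_norml => /andP[]. Qed.

Section Main.
Variables (dx dy dl : nat) (X : set 'cV[R]_dx) (Y : set 'cV[R]_dy) (Lam : set 'cV[R]_dl)
  (fbar : 'cV[R]_(dx + dy) -> R) (A : 'M[R]_(dl, dx)) (B : 'M[R]_(dl, dy))
  (c : 'cV[R]_dl) (g : 'cV[R]_(dy + dl) -> R).
Hypotheses (X0 : X !=set0) (Y0 : Y !=set0) (L0 : Lam !=set0)
  (cX : compact X) (cY : compact Y) (cL : compact Lam)
  (cfb : continuous fbar) (cg : continuous g).

Local Notation f := (fv fbar A B c).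
Local Notation G := (gv g).

Lemma fst_snd_cont {T U V : topologicalType} : continuous (fun t : T * (U * V) => t.2.1).
Proof. by move=> t; exact: (continuous_comp (snd_cont t) (fst_cont _)). Qed.
Lemma snd_snd_cont {T U V : topologicalType} : continuous (fun t : T * (U * V) => t.2.2).
Proof. by move=> t; exact: (continuous_comp (snd_cont t) (snd_cont _)). Qed.

Lemma fv_cont : continuous (fun t : 'cV[R]_dx * ('cV[R]_dy * 'cV[R]_dl) => f t.1 t.2.1 t.2.2).
Proof.
rewrite /fv => t; apply: continuousD.
  apply: (continuous_comp (f := fun t : 'cV[R]_dx * ('cV[R]_dy * 'cV[R]_dl) => col_mx t.1 t.2.1)).
    by apply: col_cont; [exact: fst_cont | exact: fst_snd_cont].
  exact: cfb.
apply: (@ent_cont _ _ _ (fun t : 'cV[R]_dx * ('cV[R]_dy * 'cV[R]_dl) =>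
   t.2.2^T *m (A *m t.1 + B *m t.2.1 - c))).
apply: mulmx_cont; first by apply: tr_cont; exact: snd_snd_cont.
apply: submx_cont; last exact: cst_continuous.
apply: addmx_cont.
  by apply: (@mulmx_cont _ _ _ _ (fun=> A)); [exact: cst_continuous | exact: fst_cont].
by apply: (@mulmx_cont _ _ _ _ (fun=> B)); [exact: cst_continuous | exact: fst_snd_cont].
Qed.

Lemma gv_cont : continuous (fun q : 'cV[R]_dy * 'cV[R]_dl => G q.1 q.2).
Proof.
rewrite /gv => q.
apply: (continuous_comp (f := fun q : 'cV[R]_dy * 'cV[R]_dl => col_mx q.1 q.2)).
  by apply: col_cont; [exact: fst_cont | exact: snd_cont].
exact: cg.
Qed.


Local Notation Pr := (Pr fbar A B c g).
Local Notation minz := (minz fbar A B c g Y).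
Local Notation Frho := (Frho fbar A B c g Y Lam).
Local Notation Phistar := (Phistar fbar A B c g X Y Lam).
Local Notation Phi := (Phi fbar A B c g Y Lam).
Local Notation Flow := (Flow g Y Lam).

Section Bnd.
Variables (M G0 : R).
Hypotheses (HM : forall x y l, X x -> Y y -> Lam l -> `|f x y l| <= M)
  (HG : forall y l, Y y -> Lam l -> `|G y l| <= G0).

Definition K (rho : R) := M + `|rho| * (G0 + G0).

Lemma Pr_bnd rho x y l z : X x -> Y y -> Lam l -> Y z -> `|Pr rho x y l z| <= K rho.
Proof.
move=> Xx Yy Ll Yz; rewrite /Pr /K.
apply: le_trans (ler_normB _ _) _; apply: lerD; first exact: HM.
rewrite normrM ler_wpM2l //.
apply: le_trans (ler_normB _ _) _; apply: lerD; exact: HG.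
Qed.

Lemma minz_le rho x y l z : X x -> Y y -> Lam l -> Y z -> minz rho x y l <= Pr rho x y l z.
Proof.
move=> Xx Yy Ll Yz; apply: ge_inf; last by exists z.
exists (- K rho) => _ [w Yw <-]; apply: bnd_lo; exact: Pr_bnd.
Qed.

Lemma minz_ge rho x y l c0 : (forall z, Y z -> c0 <= Pr rho x y l z) -> c0 <= minz rho x y l.
Proof.
move=> H; apply: lb_le_inf.
  by case: Y0 => z Yz; exists (Pr rho x y l z); exists z.
by move=> _ [z Yz <-]; exact: H.
Qed.

Lemma minz_bnd rho x y l : X x -> Y y -> Lam l -> `|minz rho x y l| <= K rho.
Proof.
move=> Xx Yy Ll; rewrite ler_norml; apply/andP; split.
  by apply: minz_ge => z Yz; apply: bnd_lo; exact: Pr_bnd.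
apply: le_trans (@minz_le rho x y l y Xx Yy Ll Yy) _; apply: bnd_hi; exact: Pr_bnd.
Qed.

Lemma Frho_ge rho x y l : X x -> Y y -> Lam l -> minz rho x y l <= Frho rho x.
Proof.
move=> Xx Yy Ll; apply: ub_le_sup; last by exists (y, l).
exists (K rho) => _ [[y' l'] [/= Yy' Ll'] <-]; apply: bnd_hi; exact: minz_bnd.
Qed.

Lemma Frho_gt rho x c0 : c0 < Frho rho x ->
  exists y l, [/\ Y y, Lam l & c0 < minz rho x y l].
Proof.
move=> H; have : [set minz rho x p.1 p.2 | p in Y `*` Lam] !=set0.
  by case: Y0 => y Yy; case: L0 => l Ll; exists (minz rho x y l); exists (y, l).
move=> /sup_gt /(_ H) [_ [[y l] [/= Yy Ll] <-] Hc].
by exists y, l.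
Qed.

Lemma Phistar_le rho x : X x -> Phistar rho <= Frho rho x.
Proof.
move=> Xx; apply: ge_inf; last by exists x.
exists (- K rho) => _ [x' Xx' <-].
case: Y0 => y Yy; case: L0 => l Ll.
apply: le_trans (@Frho_ge rho x' y l Xx' Yy Ll); apply: bnd_lo; exact: minz_bnd.
Qed.

Lemma Flow_inf p z : Flow p -> Y z -> G p.1 p.2 <= G z p.2.
Proof.
move=> [Yp [Lp ->]] Yz; apply: ge_inf; last by exists z.
exists (- G0) => _ [w Yw <-]; apply: bnd_lo; exact: HG.
Qed.

Lemma Flow_minz rho x p : 0 <= rho -> Flow p -> f x p.1 p.2 <= minz rho x p.1 p.2.
Proof.
move=> r0 Fp; apply: minz_ge => z Yz; rewrite /Pr.
have : rho * (G p.1 p.2 - G z p.2) <= 0.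
  by apply: mulr_ge0_le0 => //; rewrite subr_le0; exact: Flow_inf.
lra.
Qed.

Lemma Phi_ge x p : X x -> Flow p -> f x p.1 p.2 <= Phi x.
Proof.
move=> Xx Fp; apply: ub_le_sup; last by exists p.
exists M => _ [[y l] [/= Yy [Ll _]] <-]; apply: bnd_hi; exact: HM.
Qed.

Lemma Phi_le x c0 : Flow !=set0 -> (forall p, Flow p -> f x p.1 p.2 <= c0) -> Phi x <= c0.
Proof.
move=> [p Fp] H; apply: ge_sup; first by exists (f x p.1 p.2); exists p.
by move=> _ [q Fq <-]; exact: H.
Qed.

Lemma Flow_of q : Y q.1 -> Lam q.2 ->
  (forall z, Y z -> forall e, 0 < e -> G q.1 q.2 - G z q.2 <= e) -> Flow q.
Proof.
move=> Yq Lq H; split => //; split => //.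
apply/eqP; rewrite eq_le; apply/andP; split.
  apply: lb_le_inf; first by case: Y0 => w Yw; exists (G w q.2); exists w.
  move=> _ [z Yz <-]; rewrite -subr_le0; apply/ler_addgt0Pr => e e0.
  by rewrite add0r; exact: H.
apply: ge_inf; last by exists q.1.
exists (- G0) => _ [w Yw <-]; apply: bnd_lo; exact: HG.
Qed.

End Bnd.

Lemma fv_lim (a : nat -> 'cV[R]_dx) (b : nat -> 'cV[R]_dy) (d : nat -> 'cV[R]_dl) a0 b0 d0 :
  a @ \oo --> a0 -> b @ \oo --> b0 -> d @ \oo --> d0 ->
  (fun k => f (a k) (b k) (d k)) @ \oo --> f a0 b0 d0.
Proof.
move=> ca cb cd.
apply: (@continuous2_cvg _ _ _ _ _ _ a (fun k => (b k, d k)) (fun a q => f a q.1 q.2) a0 (b0, d0)).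
- exact: (fv_cont (a0, (b0, d0))).
- exact: ca.
apply: (@continuous2_cvg _ _ _ _ _ _ b d pair b0 d0) => //.
have -> : (fun z : 'cV[R]_dy * 'cV[R]_dl => (z.1, z.2)) = id by apply: funext => -[].
exact: cvg_id.
Qed.

Lemma gd_cont z : continuous (fun q : 'cV[R]_dy * 'cV[R]_dl => G q.1 q.2 - G z q.2).
Proof.
move=> q.
apply: (@continuousD R R^o _ (fun q : 'cV[R]_dy * 'cV[R]_dl => G q.1 q.2) (fun q => - G z q.2)); first exact: gv_cont.
apply: continuousN.
have pc : {for q, continuous (fun q : 'cV[R]_dy * 'cV[R]_dl => (z, q.2))}.
  exact: (cvg_pair (cvg_cst z) (snd_cont q)).
exact: (continuous_comp pc (gv_cont _)).
Qed.

Lemma closed_gd z e : closed [set q : 'cV[R]_dy * 'cV[R]_dl | G q.1 q.2 - G z q.2 <= e].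
Proof.
have := preimage_closed (f := fun q : 'cV[R]_dy * 'cV[R]_dl => G q.1 q.2 - G z q.2)
  (fun q _ => gd_cont z q) (@closed_le R e).
exact.
Qed.

Lemma fx_cont x : continuous (fun q : 'cV[R]_dy * 'cV[R]_dl => f x q.1 q.2).
Proof.
move=> q.
have pc : {for q, continuous (fun q : 'cV[R]_dy * 'cV[R]_dl => (x, q))}.
  exact: (cvg_pair (cvg_cst x) cvg_id).
exact: (continuous_comp pc (fv_cont _)).
Qed.

Lemma closed_fx x c0 : closed [set q : 'cV[R]_dy * 'cV[R]_dl | c0 <= f x q.1 q.2].
Proof.
have := preimage_closed (f := fun q : 'cV[R]_dy * 'cV[R]_dl => f x q.1 q.2)
  (fun q _ => fx_cont x q) (@closed_ge R c0).
exact.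
Qed.

Lemma Flow_ne : Flow !=set0.
Proof.
case: L0 => l Ll.
have cG : {within Y, continuous (fun z => G z l)}.
  apply: continuous_subspaceT => z.
  have pc : {for z, continuous (fun z : 'cV[R]_dy => (z, l))}.
    exact: (@cvg_pair _ _ _ (nbhs z) (nbhs z) (nbhs l) _ _ _ id (fun=> l) cvg_id (cvg_cst l)).
  exact: (continuous_comp pc (gv_cont (z, l))).
have [z /set_mem Yz Hz] := compact_EVT_min Y0 cY cG.
exists (z, l); split => //; split => //=.
apply/eqP; rewrite eq_le; apply/andP; split.
  apply: lb_le_inf; first by case: Y0 => w Yw; exists (G w l); exists w.
  by move=> _ [w Yw <-]; apply: Hz; exact/mem_set.
apply: ge_inf; last by exists z.
by exists (G z l) => _ [w Yw <-]; apply: Hz; exact/mem_set.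
Qed.

Lemma main_sec (rho eps : nat -> R) (xk : nat -> 'cV[R]_dx) (yk : nat -> 'cV[R]_dy)
  (lk : nat -> 'cV[R]_dl) (zk : nat -> 'cV[R]_dy) xinf yinf linf :
  (forall k, 0 < rho k) -> (forall k, 0 < eps k) ->
  rho @ \oo --> +oo -> eps @ \oo --> 0 ->
  (forall k, eps_optimal fbar A B c g X Y Lam (rho k) (eps k) (xk k) (yk k) (lk k) (zk k)) ->
  (exists phi : nat -> nat, {homo phi : m n / (m < n)%N >-> (m < n)%N} /\
     (xk \o phi) @ \oo --> xinf /\ (yk \o phi) @ \oo --> yinf /\
     (lk \o phi) @ \oo --> linf) ->
  [/\ Flow (yinf, linf), X xinf /\ (forall x, X x -> Phi xinf <= Phi x) &
      forall p, Flow p -> f xinf p.1 p.2 <= f xinf yinf linf].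
Proof.
move=> rpos epos rinfty e0 Heo [phi [Hphi [cx [cy cl]]]].
have [M HM0] := cont_bnd _ _ (compact_setX cX (compact_setX cY cL)) fv_cont.
have HM : forall x y l, X x -> Y y -> Lam l -> `|f x y l| <= M.
  by move=> x y l Xx Yy Ll; exact: (HM0 (x, (y, l))).
have [G0 HG0] := cont_bnd _ _ (compact_setX cY cL) gv_cont.
have HG : forall y l, Y y -> Lam l -> `|G y l| <= G0.
  by move=> y l Yy Ll; exact: (HG0 (y, l)).
have rI : (rho \o phi) @ \oo --> +oo := cvg_comp _ _ (@phi_cvg phi Hphi) rinfty.
have eI : (eps \o phi) @ \oo --> 0 := cvg_comp _ _ (@phi_cvg phi Hphi) e0.
have memb k : [/\ X (xk (phi k)), Y (yk (phi k)), Lam (lk (phi k)) & Y (zk (phi k))].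
  by case: (Heo (phi k)).
have opt k := (Heo (phi k)).2.
have FlowYL : forall p, Flow p -> Y p.1 /\ Lam p.2 by move=> p [? [? _]].
have [p0 Fp0] := Flow_ne.
have Pa k : Pr (rho (phi k)) (xk (phi k)) (yk (phi k)) (lk (phi k)) (zk (phi k))
    <= f (xk (phi k)) (yk (phi k)) (lk (phi k)) + eps (phi k).
  case: (memb k) => Xx Yy Ll Yz; case: (opt k) => o1 _ _.
  have := @minz_le M G0 HM HG (rho (phi k)) _ _ _ _ Xx Yy Ll Yy.
  rewrite /Pr subrr mulr0 subr0; rewrite /Pr in o1; lra.
have Pb k p : Flow p -> f (xk (phi k)) p.1 p.2 <=
    Pr (rho (phi k)) (xk (phi k)) (yk (phi k)) (lk (phi k)) (zk (phi k)) + eps (phi k).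
  move=> Fp; case: (memb k) => Xx Yy Ll Yz; case: (opt k) => _ o2 _.
  have [Yp Lp] := FlowYL p Fp.
  have h1 := @Flow_minz G0 HG (rho (phi k)) (xk (phi k)) p (ltW (rpos _)) Fp.
  have h2 := @Frho_ge M G0 HM HG (rho (phi k)) _ _ _ Xx Yp Lp.
  lra.
have Pc k z : Y z -> rho (phi k) * (G (yk (phi k)) (lk (phi k)) - G z (lk (phi k)))
    <= M + M + eps (phi k) + eps (phi k).
  move=> Yz; case: (memb k) => Xx Yy Ll _; case: (opt k) => o1 o2 _.
  have := @minz_le M G0 HM HG (rho (phi k)) _ _ _ _ Xx Yy Ll Yz.
  rewrite /Pr => h1.
  have h2 := Pb k p0 Fp0.
  have h3 := @bnd_hi _ _ (HM _ _ _ Xx Yy Ll).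
  have [Yp Lp] := FlowYL p0 Fp0.
  have h4 := @bnd_lo _ _ (HM _ _ _ Xx Yp Lp).
  lra.
have cY' : closed Y := compact_closed (@pseudoMetricNormedZModType_hausdorff R _) cY.
have cX' : closed X := compact_closed (@pseudoMetricNormedZModType_hausdorff R _) cX.
have cL' : closed Lam := compact_closed (@pseudoMetricNormedZModType_hausdorff R _) cL.
have Yinf : Y yinf.
  apply: (closed_cvg _ cY' _ _ cy); apply: nearW => k; by case: (memb k).
have Linf : Lam linf.
  apply: (closed_cvg _ cL' _ _ cl); apply: nearW => k; by case: (memb k).
have Xinf : X xinf.
  apply: (closed_cvg _ cX' _ _ cx); apply: nearW => k; by case: (memb k).
have cyl : (fun k => (yk (phi k), lk (phi k))) @ \oo --> (yinf, linf).
  exact: (cvg_pair cy cl).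
have FI : Flow (yinf, linf).
  apply: (@Flow_of G0 HG) => //= z Yz eta eta0.
  have H := @closed_cvg _ _ _ _ (fun k => (yk (phi k), lk (phi k))) _ (closed_gd z eta).
  apply: (H _ _ _ (yinf, linf) cyl).
  have E1 := (cvgryPge _).1 rI ((M + M + 1 + 1) / eta).
  have E2 := @cvgr_le R _ _ _ (eps \o phi) 0 eI 1 ltr01.
  near=> k => /=.
  have h1 : (M + M + 1 + 1) / eta <= rho (phi k) by near: k; exact: E1.
  have h2 : eps (phi k) <= 1 by near: k; exact: E2.
  have h3 := Pc k z Yz.
  rewrite ler_pdivrMr // in h1.
  rewrite -(ler_pM2l (rpos (phi k))); lra.
split => //; last first.
  move=> p Fp.
  have l1 : (fun k => f (xk (phi k)) p.1 p.2) @ \oo --> f xinf p.1 p.2.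
    by apply: fv_lim => //; exact: cvg_cst.
  have l2 : (fun k => f (xk (phi k)) (yk (phi k)) (lk (phi k))) @ \oo --> f xinf yinf linf.
    exact: fv_lim.
  have l3 : (fun k => f (xk (phi k)) p.1 p.2 - f (xk (phi k)) (yk (phi k)) (lk (phi k))
     - eps (phi k) - eps (phi k)) @ \oo --> f xinf p.1 p.2 - f xinf yinf linf - 0 - 0.
    by apply: cvgB; [apply: cvgB; [apply: cvgB|] |].
  rewrite !subr0 in l3.
  have := closed_cvg _ (@closed_le R 0) _ _ l3.
  rewrite /= subr_le0; apply; apply: nearW => k /=.
  have := Pa k; have := Pb k p Fp; lra.
split => // x Xx.
have P3 : forall p, Flow p -> f xinf p.1 p.2 <= f xinf yinf linf.
  move=> p Fp.
  have l1 : (fun k => f (xk (phi k)) p.1 p.2) @ \oo --> f xinf p.1 p.2.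
    by apply: fv_lim => //; exact: cvg_cst.
  have l2 : (fun k => f (xk (phi k)) (yk (phi k)) (lk (phi k))) @ \oo --> f xinf yinf linf.
    exact: fv_lim.
  have l3 : (fun k => f (xk (phi k)) p.1 p.2 - f (xk (phi k)) (yk (phi k)) (lk (phi k))
     - eps (phi k) - eps (phi k)) @ \oo --> f xinf p.1 p.2 - f xinf yinf linf - 0 - 0.
    by apply: cvgB; [apply: cvgB; [apply: cvgB|] |].
  rewrite !subr0 in l3.
  have := closed_cvg _ (@closed_le R 0) _ _ l3.
  rewrite /= subr_le0; apply; apply: nearW => k /=.
  have := Pa k; have := Pb k p Fp; lra.
apply: (@le_trans _ _ (f xinf yinf linf)).
  by apply: Phi_le; [exact: Flow_ne | exact: P3].
rewrite leNgt; apply/negP => HL.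
set L := f xinf yinf linf in HL.
pose c0 := (Phi x + L) / 2.
have c0L : c0 < L by rewrite /c0; lra.
have Pc0 : Phi x < c0 by rewrite /c0; lra.
have Pd k : f (xk (phi k)) yinf linf - eps (phi k) - eps (phi k) <= Frho (rho (phi k)) x.
  case: (opt k) => _ _ o3.
  have h1 := Pb k (yinf, linf) FI.
  have h2 := @Phistar_le M G0 HM HG (rho (phi k)) x Xx.
  lra.
have ls : (fun k => f (xk (phi k)) yinf linf - eps (phi k) - eps (phi k)) @ \oo --> L - 0 - 0.
  apply: cvgB; last exact: eI.
  apply: cvgB; last exact: eI.
  apply: fv_lim => //; exact: cvg_cst.
rewrite !subr0 in ls.
have EvA := @cvgr_gt R _ _ _ _ L ls c0 c0L.
pose Good k (q : 'cV[R]_dy * 'cV[R]_dl) :=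
  [/\ Y q.1, Lam q.2 & forall z, Y z -> c0 < Pr (rho (phi k)) x q.1 q.2 z].
have EvC : \forall k \near \oo, exists q, Good k q.
  near=> k.
  have h1 : c0 < f (xk (phi k)) yinf linf - eps (phi k) - eps (phi k) by near: k; exact: EvA.
  have h2 := Pd k.
  have [y [l [Yy Ll Hm]]] := @Frho_gt (rho (phi k)) x c0 (lt_le_trans h1 h2).
  exists (y, l); split => // z Yz.
  apply: (lt_le_trans Hm); exact: (@minz_le M G0 HM HG (rho (phi k)) x y l z Xx Yy Ll Yz).
have [qs Hqs] : exists qs : nat -> 'cV[R]_dy * 'cV[R]_dl,
    forall k, (exists q, Good k q) -> Good k (qs k).
  have /choice [qs Hqs] : forall k, exists q : 'cV[R]_dy * 'cV[R]_dl,
      (exists q', Good k q') -> Good k q; last by exists qs.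
  move=> k; case: (pselect (exists q', Good k q')) => [[q' Hq']|N].
    by exists q' => _.
  by exists (0, 0) => /N.
have EvG : \forall k \near \oo, Good k (qs k).
  by apply: filterS EvC => k /Hqs.
have EvK : \forall k \near \oo, (Y `*` Lam) (qs k).
  by apply: filterS EvG => k [].
have [p [Kp Hcl]] := seq_cluster _ _ _ (compact_setX cY cL) EvK.
have fp : c0 <= f x p.1 p.2.
  apply: (Hcl _ (closed_fx x c0)).
  apply: filterS EvG => k [Yq Lq Hq] /=.
  have := Hq _ Yq; rewrite /Pr subrr mulr0 subr0 => /ltW.
  done.
have Fp : Flow p.
  case: Kp => Yp Lp.
  apply: (@Flow_of G0 HG) => // z Yz eta eta0.
  apply: (Hcl _ (closed_gd z eta)).
  have E1 := (cvgryPge _).1 rI (`|M - c0| / eta).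
  near=> k => /=.
  have h1 : `|M - c0| / eta <= rho (phi k) by near: k; exact: E1.
  have [Yq Lq Hq] : Good k (qs k) by near: k; exact: EvG.
  have h3 := Hq _ Yz.
  have h4 := @bnd_hi _ _ (HM _ _ _ Xx Yq Lq).
  have h5 : M - c0 <= `|M - c0| := ler_norm _.
  rewrite ler_pdivrMr // in h1.
  rewrite /Pr in h3.
  rewrite -(ler_pM2l (rpos (phi k))); apply: ltW.
  lra.
have := @Phi_ge M HM x p Xx Fp.
lra.
Unshelve. all: by end_near.
Qed.

End Main.
End S.

Theorem mainTheorem3 (R : realType) (dx dy dl : nat)
  (X : set 'cV[R]_dx) (Y : set 'cV[R]_dy) (Lam : set 'cV[R]_dl)
  (fbar : 'cV[R]_(dx + dy) -> R) (A : 'M[R]_(dl, dx)) (B : 'M[R]_(dl, dy))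
  (c : 'cV[R]_dl) (g : 'cV[R]_(dy + dl) -> R)
  (rho eps : nat -> R)
  (xk : nat -> 'cV[R]_dx) (yk : nat -> 'cV[R]_dy) (lk : nat -> 'cV[R]_dl)
  (zk : nat -> 'cV[R]_dy)
  (xinf : 'cV[R]_dx) (yinf : 'cV[R]_dy) (linf : 'cV[R]_dl) :
  X !=set0 -> Y !=set0 -> Lam !=set0 ->
  convex_set X -> convex_set Y -> convex_set Lam ->
  compact X -> compact Y -> compact Lam ->
  C1_LipGrad_on fbar [set col_mx p.1 p.2 | p in X `*` Y] ->
  C1_LipGrad_on g [set col_mx p.1 p.2 | p in Y `*` Lam] ->
  (forall l, Lam l -> forall a b (t : R), 0 <= t -> t <= 1 ->
     gv g ((1 - t) *: a + t *: b) l <= (1 - t) * gv g a l + t * gv g b l) ->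
  (forall k, 0 < rho k) -> (forall k, 0 < eps k) ->
  rho @ \oo --> +oo -> eps @ \oo --> 0 ->
  (forall k, eps_optimal fbar A B c g X Y Lam (rho k) (eps k) (xk k) (yk k) (lk k) (zk k)) ->
  (* (xinf, yinf, linf) is an accumulation point of (xk, yk, lk) *)
  (exists phi : nat -> nat, {homo phi : m n / (m < n)%N >-> (m < n)%N} /\
     (xk \o phi) @ \oo --> xinf /\ (yk \o phi) @ \oo --> yinf /\
     (lk \o phi) @ \oo --> linf) ->
  [/\ Flow g Y Lam (yinf, linf),
      X xinf /\ (forall x, X x -> Phi fbar A B c g Y Lam xinf <= Phi fbar A B c g Y Lam x) &
      forall p, Flow g Y Lam p ->
        fv fbar A B c xinf p.1 p.2 <= fv fbar A B c xinf yinf linf].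
Proof.
move=> X0 Y0 L0 _ _ _ cX cY cL [dfb _] [dg _] _ rpos epos rI eI Heo Hsub.
have cfb : continuous fbar := fun p => differentiable_continuous (dfb p).
have cg : continuous g := fun p => differentiable_continuous (dg p).
have := (@main_sec R dx dy dl X Y Lam fbar A B c g Y0 L0 cX cY cL cfb cg rho eps xk yk lk zk xinf yinf linf rpos epos rI eI Heo Hsub).
exact.
Qed.
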